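(* Let $n\ge2$ and $k\ge1$ be integers and $z_1,\dots,z_n$ indeterminates. Then \[ \sum_{\beta\in\mathrm{Pairs}(k,n)}\det(R_3(\beta))^2=n^{k-1}\sum_{b\in C(k+1,n)}D(z(b))^2 . \]
   Context: $\mathrm{Pairs}(k,n)$ is the set of multisets $\beta$ of $k$ pairs $\{\beta(v,1),\beta(v,2)\}$ with $1\le\beta(v,1)<\beta(v,2)\le n$. For $\beta$ listed in some order $\beta(1),\dots,\beta(k)$, $R_3(\beta)$ is the $k\times k$ matrix with entries $R_3(\beta)_{u,v}=z_{\beta(v,1)}^u-z_{\beta(v,2)}^u$ ($1\le u,v\le k$); $\det(R_3(\beta))^2$ is independent of the order. $C(k+1,n)$ is the set of $(k+1)$-element subsets $b=\{b_1<\dots<b_{k+1}\}$ of $\{1,\dots,n\}$ (empty if $k+1>n$), $z(b)=(z_{b_1},\dots,z_{b_{k+1}})$ and $D(x_1,\dots,x_m)=\prod_{1\le i<j\le m}(x_j-x_i)$. *)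

(* Defs.v *)
From HB Require Import structures.
From mathcomp Require Import all_boot all_order all_algebra.
From mathcomp Require Export mpoly.
Set Implicit Arguments.
Unset Strict Implicit.
Unset Printing Implicit Defensive.
Import Order.TTheory GRing.Theory Num.Theory.
Local Open Scope ring_scope.

(* Pairs {a, b} with a < b, indices in 'I_n (0-based: index i stands for z_(i+1)). *)
Definition pair_t (n : nat) := {p : 'I_n * 'I_n | (p.1 < p.2)%N}.

(* A multiset of k pairs is given by its multiplicity function m
   (total multiplicity k); multiplicities are <= k, so values in 'I_k.+1. *)
Definition is_pairs (k n : nat) (m : {ffun pair_t n -> 'I_k.+1}) : bool :=
  (\sum_(p : pair_t n) (m p : nat) == k)%N.

Definition listing (k n : nat) (m : {ffun pair_t n -> 'I_k.+1}) : seq (pair_t n) :=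
  flatten [seq nseq (m p) p | p <- enum {: pair_t n}].

(* R_3(beta)_{u,v} = z_{beta(v,1)}^u - z_{beta(v,2)}^u, 1 <= u,v <= k
   (row index i : 'I_k stands for u = i+1). *)
Definition R3 (R : comNzRingType) (n k : nat) (z : 'I_n -> R) (s : seq (pair_t n))
  : 'M[R]_k :=
  \matrix_(i < k, j < k)
    match onth s j with
    | Some p => z (val p).1 ^+ i.+1 - z (val p).2 ^+ i.+1
    | None => 0
    end.

(* D(z(b)) = prod_{i<j in b} (z_j - z_i), i.e. the Vandermonde product of
   z_{b_1}, ..., z_{b_m} for b listed increasingly. *)
Definition Dz (R : comNzRingType) (n : nat) (z : 'I_n -> R) (b : {set 'I_n}) : R :=
  \prod_(i in b) \prod_(j in b | (i < j)%N) (z j - z i).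

(* Main.v *)
Require Import Defs.
From HB Require Import structures.
From mathcomp Require Import all_boot all_order all_algebra.
From mathcomp Require Import mpoly.
From mathcomp Require Import all_fingroup.
From mathcomp.algebra_tactics Require Import ring.
Import GRing.Theory.
Local Open Scope ring_scope.
Set Implicit Arguments. Unset Strict Implicit.

Section CB.
Variable R : comNzRingType.
Variables (T : finType) (m : nat) (x0 : T).
Variables (A : 'I_m -> T -> R) (B : T -> 'I_m -> R).

Definition eS (S : {set T}) (j : 'I_m) : T := nth x0 (enum S) j.

Lemma CB_fun :
  \det (\matrix_(i, j) \sum_t A i t * B t j) =
  \sum_(f : {ffun 'I_m -> T}) (\prod_i A i (f i)) * \det (\matrix_(i, j) B (f i) j).
Proof.
rewrite /(\det _).
transitivity (\sum_(s : 'S_m) \sum_(f : {ffun 'I_m -> T})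
   (-1) ^+ s * ((\prod_i A i (f i)) * \prod_i B (f i) (s i))).
  apply: eq_bigr => s _; rewrite -big_distrr /=; congr (_ * _).
  rewrite (eq_bigr (fun i => \sum_t A i t * B t (s i))); last by move=> i _; rewrite mxE.
  rewrite bigA_distr_bigA /=; apply: eq_bigr => f _.
  by rewrite big_split.
rewrite exchange_big; apply: eq_bigr => f _ /=.
rewrite big_distrr /=; apply: eq_bigr => s _.
rewrite mulrCA; congr (_ * (_ * _)).
by apply: eq_bigr => i _; rewrite mxE.
Qed.


Lemma eS_mem (S : {set T}) j : #|S| = m -> eS S j \in S.
Proof. by move=> cS; rewrite /eS -mem_enum mem_nth // -cardE cS. Qed.

Lemma eS_inj (S : {set T}) : #|S| = m -> injective (eS S).
Proof.
move=> cS i j; rewrite /eS => /eqP; rewrite nth_uniq ?enum_uniq // -?cardE ?cS //.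
by move/eqP/val_inj.
Qed.

Lemma CB_set :
  \det (\matrix_(i, j) \sum_t A i t * B t j) =
  \sum_(S : {set T} | #|S| == m)
     \det (\matrix_(i, j) A i (eS S j)) * \det (\matrix_(i, j) B (eS S i) j).
Proof.
rewrite CB_fun (bigID (fun f : {ffun 'I_m -> T} => injectiveb f)) /=.
rewrite [X in _ + X]big1 ?addr0; last first.
  move=> f /injectivePn [i1 [i2 Di12 Ef12]].
  by rewrite (determinant_alternate Di12) ?mulr0 // => j; rewrite !mxE Ef12.
rewrite (partition_big (fun f : {ffun 'I_m -> T} => [set f i | i : 'I_m])
   (fun S => #|S| == m)) /=; last first.
  by move=> f /injectiveP inj_f; rewrite card_imset // card_ord.
apply: eq_bigr => S /eqP cS.
have szS : size (enum S) = m by rewrite -cardE.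
have uS : uniq (enum S) := enum_uniq (mem S).
pose g (f : {ffun 'I_m -> T}) : {ffun 'I_m -> 'I_m} :=
  [ffun i => insubd i (index (f i) (enum S))].
pose h (s : 'S_m) : {ffun 'I_m -> T} := [ffun i => eS S (s i)].
pose h' f : 'S_m := insubd (1%g : 'S_m) (g f).
have gval (f : {ffun 'I_m -> T}) i : f i \in S -> val (g f i) = index (f i) (enum S).
  move=> fiS; rewrite ffunE val_insubd.
  have -> : (index (f i) (enum S) < m)%N by rewrite -[X in (_ < X)%N]szS index_mem mem_enum.
  by [].
rewrite (reindex_onto h h').
  rewrite (eq_bigl predT); last first.
    move=> s /=.
    have hinj : injectiveb (h s).
      by apply/injectiveP => i j; rewrite !ffunE => /eS_inj -/(_ cS) /perm_inj.
    have himg : [set h s i | i : 'I_m] == S.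
      rewrite eqEcard card_imset ?card_ord ?cS ?leqnn ?andbT; last exact/injectiveP.
      by apply/subsetP => x /imsetP [i _ ->]; rewrite ffunE eS_mem.
    rewrite hinj himg /=; apply/eqP/val_inj => /=.
    rewrite /h' insubdK; last first.
      have -> : g (h s) = pval s.
        apply/ffunP => i; apply/val_inj; rewrite gval ?ffunE ?eS_mem //.
        by rewrite /eS index_uniq ?szS ?ltn_ord // pvalE.
      exact: (valP s).
    apply/ffunP => i; apply/val_inj; rewrite gval ?ffunE ?eS_mem //.
    by rewrite /eS index_uniq ?szS ?ltn_ord // pvalE.
  pose X := \matrix_(i, j) A i (eS S j).
  pose Y := \matrix_(i, j) B (eS S i) j.
  rewrite /(\det X) big_distrl /=; apply: eq_bigr => s _.
  have -> : \matrix_(i, j) B (h s i) j = row_perm s Y.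
    by apply/matrixP => i j; rewrite !mxE ffunE.
  rewrite row_permE det_mulmx det_perm mulrCA mulrA; congr (_ * _).
  congr (_ * _); apply: eq_bigr => i _; by rewrite mxE ffunE.
move=> f /andP [/injectiveP finj /eqP fimg].
have fS i : f i \in S by rewrite -fimg; apply/imsetP; exists i.
have ginj : injective (g f).
  move=> i j /(congr1 val); rewrite !gval // => /(congr1 (nth x0 (enum S))).
  by rewrite !nth_index ?mem_enum // => /finj.
have hv : val (h' f) = g f.
  by rewrite /h' insubdK //; apply/injectiveP.
apply/ffunP => i; rewrite ffunE /eS.
have -> : (h' f) i = g f i by rewrite -hv pvalE.
by rewrite gval // nth_index // mem_enum.
Qed.

End CB.

Lemma enum_ord_sorted n (b : {set 'I_n}) : sorted (fun x y : 'I_n => x < y)%N (enum b).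
Proof.
have -> : enum b = [seq x <- enum 'I_n | x \in b] by rewrite enumT.
apply: sorted_filter; first by move=> x y w; apply: ltn_trans.
by have := iota_ltn_sorted 0 n; rewrite -val_enum_ord sorted_map.
Qed.

Lemma eS_mono n m (u0 : 'I_n) (b : {set 'I_n}) (i j : 'I_m) :
  #|b| = m -> (eS u0 b i < eS u0 b j)%N = (i < j)%N.
Proof.
move=> cb; have sz : size (enum b) = m by rewrite -cardE.
have hom : forall i j : 'I_m, (i < j)%N -> (eS u0 b i < eS u0 b j)%N.
  move=> i' j' lt; rewrite /eS.
  have tr : transitive (fun x y : 'I_n => x < y)%N by move=> x y w; apply: ltn_trans.
  have := sorted_ltn_nth tr u0 (enum_ord_sorted b); apply; rewrite ?inE ?sz //.
case: (ltngtP i j) => [lt|gt|eq]; first by rewrite hom.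
  by apply/negbTE; rewrite -leqNgt ltnW // hom.
have -> : i = j by apply: val_inj.
by rewrite !ltnn.
Qed.

Lemma Dz_eS (R : comNzRingType) n m (z : 'I_n -> R) (b : {set 'I_n}) u0 :
  #|b| = m ->
  Dz z b = \prod_(i < m) \prod_(j < m | (i < j)%N) (z (eS u0 b j) - z (eS u0 b i)).
Proof.
move=> cb; have sz : size (enum b) = m by rewrite -cardE.
rewrite /Dz -big_enum (big_nth u0) sz big_mkord; apply: eq_bigr => i _.
rewrite big_mkcondr /= -big_enum (big_nth u0) sz big_mkord.
rewrite [RHS]big_mkcond /=; apply: eq_bigr => j _.
by rewrite -(eS_mono u0 i j cb).
Qed.

Lemma detH (R : comNzRingType) n m (z : 'I_n -> R) (u0 : 'I_n) :
  \det (\matrix_(i < m, j < m) \sum_a z a ^+ i * z a ^+ j)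
  = \sum_(b : {set 'I_n} | #|b| == m) (Dz z b) ^+ 2.
Proof.
rewrite (CB_set u0 (fun i a => z a ^+ i) (fun a j => z a ^+ j)).
apply: eq_bigr => b /eqP cb.
have -> : \matrix_(i, j) z (eS u0 b i) ^+ j = (\matrix_(i < m, j < m) z (eS u0 b j) ^+ i)^T.
  by apply/matrixP => i j; rewrite !mxE.
rewrite det_tr expr2; congr (_ * _);
have -> : \matrix_(i < m, j < m) z (eS u0 b j) ^+ i = Vandermonde m (\row_j z (eS u0 b j))
  by apply/matrixP => i j; rewrite !mxE.
all: by rewrite det_Vandermonde (Dz_eS z u0 cb); apply: eq_bigr => i _; apply: eq_bigr => j _; rewrite !mxE.
Qed.

Lemma block_step (R : comNzRingType) n k (z : 'I_n -> R) :
  (n%:R)^+k * \det (\matrix_(i < k.+1, j < k.+1) \sum_a z a ^+ i * z a ^+ j)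
  = n%:R * \det (\matrix_(i < k, j < k) (n%:R * \sum_a z a ^+ i.+1 * z a ^+ j.+1
        - (\sum_a z a ^+ i.+1) * (\sum_a z a ^+ j.+1))).
Proof.
set H := \matrix_(i < k.+1, j < k.+1) _.
set G := \matrix_(i < k, j < k) _.
pose H' : 'M[R]_(1 + k) := H.
pose ul := ulsubmx H'; pose ur := ursubmx H'; pose dl := dlsubmx H'; pose dr := drsubmx H'.
have eH : H' = block_mx ul ur dl dr by rewrite submxK.
pose Tm := block_mx (1%:M : 'M[R]_1) (0 : 'M_(1, k)) (- dl) (n%:R%:M : 'M_k).
have dTm : \det Tm = n%:R ^+ k by rewrite det_lblock det1 det_scalar mul1r.
have eul : ul = (n%:R)%:M.
  apply/matrixP => i j; rewrite !ord1 !mxE /= mulr1n.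
  rewrite (eq_bigr (fun _ => 1)); last by move=> a _; rewrite !expr0 mulr1.
  by rewrite sumr_const card_ord.
have prod : Tm *m H' = block_mx ul ur 0 G.
  rewrite eH mulmx_block !mul1mx !mul0mx !addr0 eul.
  rewrite mulNmx mul_mx_scalar !mul_scalar_mx addNr; congr block_mx.
  apply/matrixP => i j; rewrite !mxE big_ord1 !mxE /=.
  rewrite (eq_bigr (fun a => z a ^+ i.+1)); last by move=> a _; rewrite expr0 mulr1.
  rewrite [X in _ * X](eq_bigr (fun a => z a ^+ j.+1)); last by move=> a _; rewrite expr0 mul1r.
  rewrite !add1n; ring.
have := congr1 determinant prod.
rewrite det_mulmx dTm det_ublock eul det_scalar1 => ->.
by [].
Qed.

Lemma sum_pairs (R : comNzRingType) n (p0 : pair_t n) (F : 'I_n * 'I_n -> R) :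
  \sum_(p : pair_t n) F (val p) = \sum_(q : 'I_n * 'I_n | (q.1 < q.2)%N) F q.
Proof.
rewrite (reindex_onto (fun p : pair_t n => val p) (insubd p0)) /=; last first.
  by move=> q lt; rewrite insubdK.
apply: eq_bigl => p; rewrite valKd eqxx andbT; by case: p.
Qed.

Lemma sym_sum (R : comNzRingType) n (F' : 'I_n -> 'I_n -> R) :
  (forall a b, F' a b = F' b a) -> (forall a, F' a a = 0) ->
  \sum_(q : 'I_n * 'I_n) F' q.1 q.2 = 2%:R * \sum_(q : 'I_n * 'I_n | (q.1 < q.2)%N) F' q.1 q.2.
Proof.
move=> Fs F0.
rewrite (bigID (fun q : 'I_n * 'I_n => (q.1 < q.2)%N)) /=.
rewrite [X in _ + X](bigID (fun q : 'I_n * 'I_n => (q.2 < q.1)%N)) /=.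
rewrite [X in _ + (_ + X)]big1 ?addr0; last first.
  move=> [a b] /= /andP [h1 h2'].
  have -> : a = b by apply/val_inj/eqP; rewrite eqn_leq leqNgt h2' leqNgt h1.
  by rewrite F0.
have sw : injective (fun q : 'I_n * 'I_n => (q.2, q.1)) by move=> [a b] [c d] [-> ->].
rewrite [X in _ + X](reindex_inj sw) /=.
rewrite [X in _ + X](eq_big (fun q : 'I_n * 'I_n => (q.1 < q.2)%N) (fun q => F' q.1 q.2)).
- by rewrite mulr_natl mulr2n.
- by move=> [a b] /=; case: ltngtP.
- by move=> [a b] _ /=.
Qed.
Lemma full_sum (R : comNzRingType) n (x y : 'I_n -> R) :
  \sum_(q : 'I_n * 'I_n) (x q.1 - x q.2) * (y q.1 - y q.2)
  = 2%:R * (n%:R * (\sum_a x a * y a) - (\sum_a x a) * (\sum_a y a)).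
Proof.
rewrite -(pair_bigA _ (fun a b => (x a - x b) * (y a - y b))) /=.
have inner a : \sum_b (x a - x b) * (y a - y b) = (x a * y a) *+ n + \sum_b x b * y b
     - x a * (\sum_b y b) - y a * (\sum_b x b).
  rewrite (eq_bigr (fun b => (x a * y a + x b * y b) - (x a * y b + y a * x b))); last first.
    by move=> b _; ring.
  rewrite sumrB !big_split /= sumr_const card_ord !big_distrr /=.
  ring.
rewrite (eq_bigr _ (fun a _ => inner a)).
rewrite !sumrB big_split /= sumr_const card_ord -!big_distrl /=.
under eq_bigr do rewrite -mulr_natl.
rewrite -big_distrr /=; ring.
Qed.

Lemma lagrange (R : idomainType) n (p0 : pair_t n) (x y : 'I_n -> R) :
  (2%:R : R) != 0 ->
  \sum_(p : pair_t n) (x (val p).1 - x (val p).2) * (y (val p).1 - y (val p).2)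
  = n%:R * (\sum_a x a * y a) - (\sum_a x a) * (\sum_a y a).
Proof.
move=> h2.
have e := full_sum x y.
rewrite (@sym_sum R n (fun a b => (x a - x b) * (y a - y b))) in e; last first.
- by move=> a; rewrite subrr mul0r.
- by move=> a b; ring.
rewrite (sum_pairs p0 (fun q => (x q.1 - x q.2) * (y q.1 - y q.2))).
exact: (mulfI h2 e).
Qed.

Lemma onth_some (T : Type) (s : seq T) (x0 : T) j :
  (j < size s)%N -> onth s j = Some (nth x0 s j).
Proof. by move=> lt; rewrite onthE (nth_map x0). Qed.

Section P1.
Variables (n k : nat).
Implicit Types (m : {ffun pair_t n -> 'I_k.+1}).

Lemma L_count m p : count_mem p (listing m) = m p.
Proof.
rewrite /listing count_flatten -map_comp sumnE big_map big_enum /=.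
rewrite (bigD1 p) //= count_nseq /= eqxx mul1n big1 ?addn0 //.
by move=> q qp; rewrite count_nseq /= (negPf qp).
Qed.

Lemma L_size m : size (listing m) = (\sum_p m p)%N.
Proof.
rewrite /listing size_flatten /shape -map_comp sumnE big_map big_enum /=.
by apply: eq_bigr => p _; rewrite /= size_nseq.
Qed.

Hypothesis hk : (1 <= k)%N.

Definition hS (S : {set pair_t n}) : {ffun pair_t n -> 'I_k.+1} :=
  [ffun p => inord (p \in S)].

Lemma hS_val S p : (hS S p : nat) = (p \in S).
Proof. by rewrite ffunE inordK // ltnS (leq_trans (leq_b1 _) hk). Qed.

Lemma hS_val' S p : val (hS S p) = (p \in S).
Proof. exact: hS_val. Qed.

Lemma L_listS S : listing (hS S) = enum S.
Proof.
rewrite /listing.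
have -> : forall s, flatten [seq nseq (hS S q) q | q <- s] = [seq q <- s | q \in S].
  elim => //= q s IH; rewrite hS_val IH; by case: (q \in S).
by rewrite enumT.
Qed.


Definition Mf (R : comNzRingType) (z : 'I_n -> R) (i : nat) (p : pair_t n) : R :=
  z (val p).1 ^+ i.+1 - z (val p).2 ^+ i.+1.

Lemma L_R3 (R : comNzRingType) (z : 'I_n -> R) (p0 : pair_t n) (S : {set pair_t n}) :
  #|S| = k -> R3 k z (enum S) = \matrix_(i < k, j < k) Mf z i (eS p0 S j).
Proof.
move=> cS; apply/matrixP => i j; rewrite !mxE (onth_some p0) //.
by rewrite -cardE cS.
Qed.

Lemma P1 (R : comNzRingType) (z : 'I_n -> R) (p0 : pair_t n) :
  \sum_(m : {ffun pair_t n -> 'I_k.+1} | is_pairs m) (\det (R3 k z (listing m))) ^+ 2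
  = \sum_(S : {set pair_t n} | #|S| == k)
       (\det (\matrix_(i < k, j < k) Mf z i (eS p0 S j))) ^+ 2.
Proof.
rewrite (bigID (fun m => uniq (listing m))) /= [X in _ + X]big1 ?addr0; last first.
  move=> m /andP [/eqP sm nu].
  have sz : size (listing m) = k by rewrite L_size.
  case/(uniqPn p0): nu => i [j [lij ljs enij]].
  rewrite sz in ljs.
  have lik : (i < k)%N by apply: ltn_trans ljs.
  rewrite -det_tr (@determinant_alternate _ _ _ (Ordinal lik) (Ordinal ljs)).
  - by rewrite expr2 mul0r.
  - by apply/eqP => /(congr1 val) /= e; rewrite e ltnn in lij.
  - move=> c; rewrite !mxE /= (onth_some p0) ?sz // (onth_some p0) ?sz //.
    by rewrite enij.
pose h' (m : {ffun pair_t n -> 'I_k.+1}) : {set pair_t n} := [set p | m p != ord0].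
rewrite (reindex_onto (@hS) h') /=; last first.
  move=> m /andP [_ um]; apply/ffunP => p; apply/val_inj; rewrite hS_val' inE.
  have := count_uniq_mem p um; rewrite L_count => e.
  have le1 : (m p <= 1)%N by rewrite e leq_b1.
  rewrite -(inj_eq val_inj) /=.
  by move: le1; case: (nat_of_ord (m p)) => [|[|v]].
rewrite (eq_bigl (fun S : {set pair_t n} => #|S| == k)).
  by apply: eq_bigr => S /eqP cS; rewrite L_listS (L_R3 z p0 cS).
move=> S; rewrite L_listS enum_uniq andbT.
have -> : h' (hS S) == S.
  apply/eqP/setP => p; rewrite inE -(inj_eq val_inj) /= hS_val.
  by case: (p \in S).
rewrite andbT /is_pairs (eq_bigr (fun p => nat_of_bool (p \in S))); last first.
  by move=> p _; rewrite hS_val.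
rewrite -sum1_card [in RHS]big_mkcond /=; congr (_ == _); apply: eq_bigr => p _; by case: (p \in S).
Qed.

End P1.

Lemma mpoly_nat_neq0 n (c : nat) : (0 < c)%N -> (c%:R : {mpoly int[n]}) != 0.
Proof.
move=> c0; apply/eqP => /(congr1 (mcoeff 0%MM)).
rewrite mcoeffMn mcoeff1 eqxx mcoeff0 => /eqP.
by rewrite Num.Theory.pnatr_eq0 => /eqP c00; rewrite c00 in c0.
Qed.

Theorem theorem5p1 (n k : nat) (hn : (2 <= n)%N) (hk : (1 <= k)%N) :
  \sum_(m : {ffun pair_t n -> 'I_k.+1} | is_pairs m)
      (\det (R3 k (fun i : 'I_n => 'X_i : {mpoly int[n]}) (listing m))) ^+ 2
  = (n%:R : {mpoly int[n]}) ^+ (k - 1)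
    * \sum_(b : {set 'I_n} | #|b| == k.+1)
        (Dz (fun i : 'I_n => 'X_i : {mpoly int[n]}) b) ^+ 2.
Proof.
set z := (fun i : 'I_n => 'X_i : {mpoly int[n]}).
have n0 : (0 < n)%N by apply: ltn_trans hn.
pose u0 : 'I_n := Ordinal n0.
pose p0 : pair_t n := exist _ (Ordinal n0, Ordinal hn) isT.
have h2 : (2%:R : {mpoly int[n]}) != 0 by apply: mpoly_nat_neq0.
have nz : (n%:R : {mpoly int[n]}) != 0 by apply: mpoly_nat_neq0.
rewrite (P1 hk z p0).
have cb := CB_set p0 (fun (i : 'I_k) p => Mf z i p) (fun p (j : 'I_k) => Mf z j p).
have -> : \sum_(S : {set pair_t n} | #|S| == k)
       (\det (\matrix_(i < k, j < k) Mf z i (eS p0 S j))) ^+ 2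
   = \det (\matrix_(i < k, j < k) (n%:R * \sum_a z a ^+ i.+1 * z a ^+ j.+1
        - (\sum_a z a ^+ i.+1) * (\sum_a z a ^+ j.+1))).
  have -> : \matrix_(i < k, j < k) (n%:R * \sum_a z a ^+ i.+1 * z a ^+ j.+1
        - (\sum_a z a ^+ i.+1) * (\sum_a z a ^+ j.+1))
     = \matrix_(i < k, j < k) \sum_p Mf z i p * Mf z j p.
    apply/matrixP => i j; rewrite !mxE /Mf.
    by rewrite (lagrange p0 (fun a => z a ^+ i.+1) (fun a => z a ^+ j.+1) h2).
  rewrite cb; apply: eq_bigr => S _; rewrite expr2; congr (_ * _).
  rewrite -det_tr; congr determinant; apply/matrixP => i j; by rewrite !mxE.
apply: (mulfI nz).
rewrite -(@block_step _ n k z) (@detH _ n k.+1 z u0) mulrA -exprS.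
by rewrite subn1 prednK.
Qed.
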